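(* Let $\widehat M$ be a cooperative Markov game with MMDP $M$, $(S_{target},S_{avoid})$ a reach-avoid objective, and $(\pi_{comm},\pi_{act})\in\Pi^{pos}_{comm}(\mathcal O,K)\times\Pi^{pos}_{act}(M)$, and assume all occupancy measures $\nu_{s,a}$ ($s\notin\mathcal T$) of the full-communication process are finite. Then for every agent $i\in[N]$ and every $c\in\mathcal A_{comm}$, $$G^i\le\bar G^i\quad\text{and}\quad G^c\le\bar G^c,$$ where $\bar G^i=-\sum_{o,l^i,a^i}\nu_{o,l^i,a^i}\,w'(o,i)\log\frac{\nu_{o,l^i,a^i}}{\sum_{b^i\in\mathcal A^i}\nu_{o,l^i,b^i}}-\sum_{o,l^i,a^i,o^i_1,l^i_1}\nu_{o,l^i,a^i}\,w'(o,i)\,P^i((o^i,l^i),a^i)((o^i_1,l^i_1))\log P^i((o^i,l^i),a^i)((o^i_1,l^i_1))$, $\bar G^c=-\sum_{o,l^c,a^c}\nu_{o,l^c,a^c}\,w''(o,c)\log\frac{\nu_{o,l^c,a^c}}{\sum_{b^c\in\mathcal A^c}\nu_{o,l^c,b^c}}-\sum_{o,l^c,a^c,o^c_1,l^c_1}\nu_{o,l^c,a^c}\,w''(o,c)\,P^c((o^c,l^c),a^c)((o^c_1,l^c_1))\log P^c((o^c,l^c),a^c)((o^c_1,l^c_1))$.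
   Context: MMDP: there are $N\ge1$ agents, identified with $[N]=\{1,\dots,N\}$. Agent $i$ has a finite local state set $\mathcal S^i$, finite local action set $\mathcal A^i$, local transition function $P^i:\mathcal S^i\times\mathcal A^i\to\Delta(\mathcal S^i)$ and initial local state $s^i_{init}$. Joint states $\mathcal S=\prod_i\mathcal S^i$, joint actions $\mathcal A=\prod_i\mathcal A^i$, joint transitions $P(s,a)(u)=\prod_{i}P^i(s^i,a^i)(u^i)$, initial state $s_{init}=(s^1_{init},\dots,s^N_{init})$. A positional joint action policy is a map $\pi_{act}:\mathcal S\to\Delta(\mathcal A)$; $\Pi^{pos}_{act}(M)$ is the set of these. Cooperative Markov game $\widehat M=(M,\mathcal O^1,\dots,\mathcal O^N,\mathcal L^1,\dots,\mathcal L^N,K)$: each $\mathcal S^i=\mathcal O^i\times\mathcal L^i$ (public part $o^i$, local part $l^i$); $\mathcal O=\prod_i\mathcal O^i$, $\mathcal L=\prod_i\mathcal L^i$, and a joint state is written $s=(o,l)$. For $c\subseteq[N]$, $\mathcal O^c=\prod_{j\in c}\mathcal O^j$, $\mathcal L^c=\prod_{j\in c}\mathcal L^j$, $\mathcal A^c=\prod_{j\in c}\mathcal A^j$, $o^c,l^c,a^c$ denote restrictions to coordinates in $c$, and $P^c((o^c,l^c),a^c)((o^c_1,l^c_1))=\prod_{j\in c}P^j((o^j,l^j),a^j)((o^j_1,l^j_1))$. $K\in\{0,\dots,N\}$ and $\mathcal A_{comm}$ is the set of subsets of $[N]$ of size $K$ (so $\mathcal A_{comm}=\{\emptyset\}$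 if $K=0$). A positional communication policy is a map $\pi_{comm}:\mathcal O\to\Delta(\mathcal A_{comm})$; $\Pi^{pos}_{comm}(\mathcal O,K)$ is the set of these. Reach-avoid objective: disjoint sets $S_{target},S_{avoid}\subseteq\mathcal S$; put $\mathcal T=S_{target}\cup S_{avoid}$. Full-communication process $M_{\pi_{act}}$: random sequence $S_0=s_{init},A_1,S_1,A_2,S_2,\dots$ with $\mathbb P(A_t=a,S_t=s'\mid S_0,A_1,\dots,S_{t-1}=s)=\pi_{act}(s)(a)P(s,a)(s')$. Write $S_t=(O_t,L_t)$ and $A^c_t,O^c_t,L^c_t$ (resp. $A^i_t,O^i_t,L^i_t$) for components in $c$ (resp. $i$). The process is regarded as stopped upon entering $\mathcal T$: with $E_{t}=\{S_0,\dots,S_{t}\notin\mathcal T\}$, every probability of an event concerning times $t-1,t$ is the probability of that event intersected with $E_{t-1}$, and conditional probabilities condition on the conditioning event intersected with $E_{t-1}$. For $c\subseteq[N]$ and $t\ge1$ let $q^c_t(a^c,o^c_1,l^c_1\mid o,l^c)=\mathbb P(A^c_t=a^c,O^c_t=o^c_1,L^c_t=l^c_1\mid O_{t-1}=o,L^c_{t-1}=l^c,E_{t-1})$ (write $q^i_t$ for $c=\{i\}$). Weights: $w'(o,i)=\sum_{c\in\mathcal A_{comm},\,i\notin c}\pi_{comm}(o)(c)$ and $w''(o,c)=\pi_{comm}(o)(c)$. $G^i=\sum_{t\ge1}\sum_{o\in\mathcal O,l^i\in\mathcal L^i}w'(o,i)\,\mathbb P(O_{t-1}=o,L^i_{t-1}=l^i,E_{t-1})\Big(-\sum_{a^i,o^i_1,l^i_1}q^i_t\log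 q^i_t\Big)$ with $q^i_t=q^i_t(a^i,o^i_1,l^i_1\mid o,l^i)$; $G^c=\sum_{t\ge1}\sum_{o\in\mathcal O,l^c\in\mathcal L^c}w''(o,c)\,\mathbb P(O_{t-1}=o,L^c_{t-1}=l^c,E_{t-1})\Big(-\sum_{a^c,o^c_1,l^c_1}q^c_t\log q^c_t\Big)$. Occupancy measures: $\nu_{s,a}=\sum_{t\ge1}\mathbb P(S_{t-1}=s,A_t=a,E_{t-1})$ for $s\notin\mathcal T$; marginals $\nu_{o,l^c,a^c}=\sum\nu_{(o,l),a}$ over all $l\in\mathcal L$ with restriction $l^c$ and $(o,l)\notin\mathcal T$, and all $a\in\mathcal A$ with restriction $a^c$ ($\nu_{o,l^i,a^i}$ for $c=\{i\}$). Conventions: $0\log0=0$; summands with $\nu=0$ are $0$. *)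

(* Defs.v *)
From HB Require Import structures.
From mathcomp Require Import all_boot all_order all_algebra.
From mathcomp Require Import all_classical all_reals all_analysis.
Set Implicit Arguments.
Unset Strict Implicit.
Unset Printing Implicit Defensive.
Import Order.TTheory GRing.Theory Num.Theory.
Local Open Scope ring_scope.

Section MMDP.
Variable R : realType.
Variable N : nat.
(* agent i : public local states O i, private local states L i, actions A i *)
Variables (O L A : 'I_N -> finType).

Definition jO := {dffun forall i : 'I_N, O i}.
Definition jL := {dffun forall i : 'I_N, L i}.
Definition jA := {dffun forall i : 'I_N, A i}.
Definition jS := (jO * jL)%type.

Variable P : forall i : 'I_N, (O i * L i)%type -> A i -> (O i * L i)%type -> R.

Definition Pj (s : jS) (a : jA) (s' : jS) : R :=
  \prod_(i : 'I_N) P (s.1 i, s.2 i) (a i) (s'.1 i, s'.2 i).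

Variable sinit : jS.
Variable pi_act : jS -> jA -> R.
(* T = S_target :|: S_avoid *)
Variable T : {set jS}.

(* mu k s = P(S_k = s, E_{k-1})  (with E_{-1} the sure event):
   marginal law of the full-communication process stopped on T *)
Fixpoint mu (k : nat) (s' : jS) : R :=
  match k with
  | 0 => (s' == sinit)%:R
  | k.+1 => \sum_(s : jS | s \notin T) \sum_(a : jA) mu k s * pi_act s a * Pj s a s'
  end.

(* step k s a s' = P(S_k = s, A_{k+1} = a, S_{k+1} = s', E_k) *)
Definition step (k : nat) (s : jS) (a : jA) (s' : jS) : R :=
  (s \notin T)%:R * mu k s * pi_act s a * Pj s a s'.

(* occupancy measure nu_{s,a} = sum_{t>=1} P(S_{t-1}=s, A_t=a, E_{t-1}) *)
Definition occ (s : jS) (a : jA) : \bar R :=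
  (\sum_(k <oo) ((s \notin T)%:R * mu k s * pi_act s a)%:E)%E.

Definition occr (s : jS) (a : jA) : R := fine (occ s a).

Section Generic.
(* X : conditioning information at time t-1 (o, l^c);
   Y : information at time t (a^c, o^c_1, l^c_1);
   f, g : the corresponding projections;  w : weight *)
Variables (X Y : finType) (f : jS -> X) (g : jA -> jS -> Y) (w : X -> R).

(* probX k x = P(X_{t-1} = x, E_{t-1}) with t = k+1 *)
Definition probX (k : nat) (x : X) : R :=
  \sum_(s : jS | (s \notin T) && (f s == x)) mu k s.

Definition probXY (k : nat) (x : X) (y : Y) : R :=
  \sum_(s : jS) \sum_(a : jA) \sum_(s' : jS)
     (f s == x)%:R * (g a s' == y)%:R * step k s a s'.

Definition qcond (k : nat) (x : X) (y : Y) : R := probXY k x y / probX k x.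

Definition Hcond (k : nat) (x : X) : R :=
  - \sum_(y : Y) qcond k x y * ln (qcond k x y).

Definition Gent : \bar R :=
  (\sum_(k <oo) (\sum_(x : X) w x * probX k x * Hcond k x)%:E)%E.

Variables (Ac Y' : finType) (h : jA -> Ac) (PX : X -> Ac -> Y' -> R).

Definition numarg (x : X) (ac : Ac) : R :=
  \sum_(s : jS | (s \notin T) && (f s == x)) \sum_(a : jA | h a == ac) occr s a.

Definition Gbar : R :=
  - (\sum_(x : X) \sum_(ac : Ac)
        numarg x ac * w x * ln (numarg x ac / \sum_(b : Ac) numarg x b))
  - (\sum_(x : X) \sum_(ac : Ac) \sum_(y : Y')
        numarg x ac * w x * PX x ac y * ln (PX x ac y)).
End Generic.

Variable K : nat.
Variable pi_comm : jO -> {set 'I_N} -> R.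

Definition wprime (o : jO) (i : 'I_N) : R :=
  \sum_(c : {set 'I_N} | (#|c| == K) && (i \notin c)) pi_comm o c.

Definition fi (i : 'I_N) (s : jS) : (jO * L i)%type := (s.1, s.2 i).
Definition gi (i : 'I_N) (a : jA) (s' : jS) : (A i * (O i * L i))%type :=
  (a i, (s'.1 i, s'.2 i)).
Definition hi (i : 'I_N) (a : jA) : A i := a i.
Definition PXi (i : 'I_N) (x : (jO * L i)%type) (ai : A i) (y : (O i * L i)%type) : R :=
  P (x.1 i, x.2) ai y.

Definition G_agent (i : 'I_N) : \bar R :=
  Gent (fi i) (@gi i) (fun x : (jO * L i)%type => wprime x.1 i).
Definition Gbar_agent (i : 'I_N) : R :=
  Gbar (fi i) (fun x : (jO * L i)%type => wprime x.1 i) (@hi i) (@PXi i).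

Definition cidx (c : {set 'I_N}) := {j : 'I_N | j \in c}.
Definition Oc (c : {set 'I_N}) := {dffun forall j : cidx c, O (val j)}.
Definition Lc (c : {set 'I_N}) := {dffun forall j : cidx c, L (val j)}.
Definition Ac_ (c : {set 'I_N}) := {dffun forall j : cidx c, A (val j)}.

Definition fc (c : {set 'I_N}) (s : jS) : (jO * Lc c)%type :=
  (s.1, [ffun j : cidx c => s.2 (val j)]).
Definition gc (c : {set 'I_N}) (a : jA) (s' : jS) : (Ac_ c * (Oc c * Lc c))%type :=
  ([ffun j : cidx c => a (val j)],
   ([ffun j : cidx c => s'.1 (val j)], [ffun j : cidx c => s'.2 (val j)])).
Definition hc (c : {set 'I_N}) (a : jA) : Ac_ c := [ffun j : cidx c => a (val j)].
Definition PXc (c : {set 'I_N}) (x : (jO * Lc c)%type) (ac : Ac_ c)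
    (y : (Oc c * Lc c)%type) : R :=
  \prod_(j : cidx c) P (x.1 (val j), x.2 j) (ac j) (y.1 j, y.2 j).

Definition G_coal (c : {set 'I_N}) : \bar R :=
  Gent (fc c) (@gc c) (fun x : (jO * Lc c)%type => pi_comm x.1 c).
Definition Gbar_coal (c : {set 'I_N}) : R :=
  Gbar (fc c) (fun x : (jO * Lc c)%type => pi_comm x.1 c) (@hc c) (@PXc c).

End MMDP.

(* Main.v *)
Require Import Defs.
From HB Require Import structures.
From mathcomp Require Import all_boot all_order all_algebra.
From mathcomp Require Import all_classical all_reals all_analysis.
Import Order.TTheory GRing.Theory Num.Theory.
Local Open Scope ring_scope.
From mathcomp Require Import ring lra.
Lemma prod_sum_dffun (R : comNzRingType) (I : finType) (T_ : I -> finType)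
  (F : forall i, T_ i -> R) :
  \prod_(i : I) \sum_(x : T_ i) F i x =
  \sum_(f : {dffun forall i, T_ i}) \prod_(i : I) F i (f i).
Proof.
pose P_ := fun i => [ffun x : T_ i => F i x].
transitivity (\prod_(i : I) \sum_(j in tagged_with T_ i) untag 0 (P_ i) j).
  apply: eq_bigr => i _.
  have -> : \sum_(x : T_ i) F i x = \sum_(x : T_ i) P_ i x.
    by apply: eq_bigr => x _; rewrite ffunE.
  exact: (big_tag (op := +%R) (fun i => fun_of_fin (P_ i)) i).
rewrite bigA_distr_big_dep.
rewrite -(@big_fprod R 0 1 *%R +%R I T_ P_).
rewrite (reindex (@fprod_of_dffun I T_)); last exact/onW_bij/fprod_of_dffun_bij.
apply: eq_bigr => f _; apply: eq_bigr => i _.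
by rewrite /fprod_of_dffun fprodE ffunE.
Qed.

Lemma pair_prod_sum (R : comNzRingType) (I : finType) (T1 T2 : I -> finType)
  (H : forall i, (T1 i * T2 i)%type -> R) :
  \sum_(p : ({dffun forall i, T1 i} * {dffun forall i, T2 i})%type)
     \prod_i H i (p.1 i, p.2 i) = \prod_i \sum_z H i z.
Proof.
transitivity (\sum_(o : {dffun forall i, T1 i}) \sum_(l : {dffun forall i, T2 i})
   \prod_i H i (o i, l i)).
  by rewrite pair_big; apply: eq_bigr; case.
transitivity (\prod_i \sum_(x : T1 i) \sum_(y : T2 i) H i (x, y)); last first.
  by apply: eq_bigr => i _; rewrite pair_big; apply: eq_bigr; case.
rewrite prod_sum_dffun; apply: eq_bigr => o _.
by rewrite prod_sum_dffun.
Qed.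

Lemma prod_ind (R : comNzRingType) (I : finType) (b : I -> bool) :
  \prod_i ((b i)%:R : R) = ([forall i, b i])%:R.
Proof.
case: (boolP [forall i, b i]) => [/forallP H|/forallP H].
  by apply: big1 => i _; rewrite H.
have [i bi] : exists i, ~~ b i.
  by apply/existsP; rewrite -negb_forall; apply/negP => /forallP.
by rewrite (bigD1 i) //= (negbTE bi) mul0r.
Qed.

Lemma Tagged_eq (I : eqType) (T_ : I -> eqType) i (x y : T_ i) :
  (Tagged T_ x == Tagged T_ y) = (x == y).
Proof. exact: (inj_eq (@eq_from_Tagged I T_ i)). Qed.

Section MargS.
Variables (R : realType) (N : nat) (O L A : 'I_N -> finType).
Variable P : forall i : 'I_N, (O i * L i)%type -> A i -> (O i * L i)%type -> R.
Hypothesis HP1 : forall i s a, \sum_(s' : (O i * L i)%type) P i s a s' = 1.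

Lemma GM (s : jS O L) (a : jA A) (b : forall j, (O j * L j)%type -> bool) :
  \sum_(s' : jS O L) ([forall j, b j (s'.1 j, s'.2 j)])%:R * Pj P s a s'
  = \prod_j \sum_z (b j z)%:R * P j (s.1 j, s.2 j) (a j) z.
Proof.
rewrite -(@pair_prod_sum _ _ _ _ (fun j z => (b j z)%:R * P j (s.1 j, s.2 j) (a j) z)).
apply: eq_bigr => s' _.
by rewrite -prod_ind /Pj big_split.
Qed.

Lemma marg_agent i (s : jS O L) (a : jA A) (y : (O i * L i)%type) :
  \sum_(s' : jS O L | (s'.1 i, s'.2 i) == y) Pj P s a s' = P i (s.1 i, s.2 i) (a i) y.
Proof.
pose b := fun j (z : (O j * L j)%type) =>
  (j != i) || (Tagged (fun k => (O k * L k)%type) z == Tagged (fun k => (O k * L k)%type) y).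
rewrite big_mkcond /=.
transitivity (\sum_(s' : jS O L) ([forall j, b j (s'.1 j, s'.2 j)])%:R * Pj P s a s').
  apply: eq_bigr => s' _.
  have -> : [forall j, b j (s'.1 j, s'.2 j)] = ((s'.1 i, s'.2 i) == y).
    apply/forallP/idP => [/(_ i)|H j]; first by rewrite /b eqxx /= Tagged_eq.
    rewrite /b; case: (eqVneq j i) => //= ->.
    by rewrite Tagged_eq.
  by case: ifP; rewrite ?mul1r ?mul0r.
rewrite GM (bigD1 i) //= [X in _ * X]big1 ?mulr1; last first.
  move=> j ji; rewrite /b ji /=.
  by under eq_bigr do rewrite mul1r; exact: HP1.
rewrite /b eqxx /=.
under eq_bigr do rewrite Tagged_eq.
rewrite (bigD1 y) //= eqxx mul1r big1 ?addr0 // => z zy.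
by rewrite (negbTE zy) mul0r.
Qed.
Lemma marg_coal (c : {set 'I_N}) (s : jS O L) (a : jA A) (y : (Oc O c * Lc L c)%type) :
  \sum_(s' : jS O L | (([ffun jj : cidx c => s'.1 (val jj)] : Oc O c), ([ffun jj : cidx c => s'.2 (val jj)] : Lc L c)) == y)
     Pj P s a s'
  = \prod_(jj : cidx c) P (val jj) (s.1 (val jj), s.2 (val jj)) (a (val jj)) (y.1 jj, y.2 jj).
Proof.
pose Tz := fun k => (O k * L k)%type.
pose b := fun j (z : Tz j) =>
  if (insub j : option (cidx c)) is Some jj then Tagged Tz z == Tagged Tz (y.1 jj, y.2 jj)
  else true.
rewrite big_mkcond /=.
transitivity (\sum_(s' : jS O L) ([forall j, b j (s'.1 j, s'.2 j)])%:R * Pj P s a s').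
  apply: eq_bigr => s' _.
  have -> : [forall j, b j (s'.1 j, s'.2 j)] =
     ((([ffun jj : cidx c => s'.1 (val jj)] : Oc O c), ([ffun jj : cidx c => s'.2 (val jj)] : Lc L c)) == y).
    apply/forallP/eqP => [H|E j].
      have K jj : (s'.1 (val jj), s'.2 (val jj)) = (y.1 jj, y.2 jj).
        by have := H (val jj); rewrite /b valK Tagged_eq => /eqP.
      clear H b; case: y K => y1 y2 K.
      congr pair; apply/ffunP => jj; rewrite ffunE; by case: (K jj).
    rewrite /b; case: insubP => [jj _ ej|] //=.
    subst j; rewrite Tagged_eq -E !ffunE; exact: eqxx.
  by case: ifP; rewrite ?mul1r ?mul0r.
rewrite GM.
pose G := fun jj : cidx c => P (val jj) (s.1 (val jj), s.2 (val jj)) (a (val jj)) (y.1 jj, y.2 jj).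
transitivity (\prod_j (if (insub j : option (cidx c)) is Some jj then G jj else 1)).
  apply: eq_bigr => j _; rewrite /b; case: insubP => [jj _ ej|_] /=.
    subst j; under eq_bigr do rewrite Tagged_eq.
    rewrite (bigD1 (y.1 jj, y.2 jj)) //= eqxx mul1r big1 ?addr0 // => z zy.
    by rewrite (negbTE zy) mul0r.
  by under eq_bigr do rewrite mul1r; exact: HP1.
rewrite (bigID (fun j => j \in c)) /= [X in _ * X]big1 ?mulr1 => [|j jc]; last first.
  by rewrite insubN.
rewrite big_sub; apply: eq_bigr => jj _; by rewrite valK.
Qed.

End MargS.

Section Gen.
Variables (R : realType) (N : nat) (O L A : 'I_N -> finType).
Variable P : forall i : 'I_N, (O i * L i)%type -> A i -> (O i * L i)%type -> R.
Hypothesis HP0 : forall i s a s', 0 <= P i s a s'.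
Variables (sinit : jS O L) (pi_act : jS O L -> jA A -> R) (T : {set jS O L}).
Hypothesis Ha0 : forall s a, 0 <= pi_act s a.
Hypothesis Ha1 : forall s, \sum_(a : jA A) pi_act s a = 1.
Hypothesis Hfin : forall s a, s \notin T -> (occ P sinit pi_act T s a < +oo)%E.
Variables (X Ac Y' : finType) (f : jS O L -> X) (h : jA A -> Ac) (g2 : jS O L -> Y')
  (w : X -> R) (PX : X -> Ac -> Y' -> R).
Hypothesis Hw0 : forall x, 0 <= w x.
Hypothesis HPX0 : forall x ac y, 0 <= PX x ac y.
Hypothesis HPX1 : forall x ac, \sum_y PX x ac y = 1.
Hypothesis Hmarg : forall s a y, \sum_(s' | g2 s' == y) Pj P s a s' = PX (f s) (h a) y.

Local Notation mu' := (mu P sinit pi_act T).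

Lemma Pj_ge0 s a s' : 0 <= Pj P s a s'.
Proof. by apply: prodr_ge0 => i _; exact: HP0. Qed.

Lemma mu_ge0 k s : 0 <= mu' k s.
Proof.
elim: k s => [|k IH] s /=; first by rewrite ler0n.
apply: sumr_ge0 => s0 _; apply: sumr_ge0 => a _.
by rewrite !mulr_ge0 ?Pj_ge0.
Qed.

Definition Q k x ac := \sum_(s | (s \notin T) && (f s == x))
   \sum_(a | h a == ac) mu' k s * pi_act s a.

Lemma Q_ge0 k x ac : 0 <= Q k x ac.
Proof. by apply: sumr_ge0 => s _; apply: sumr_ge0 => a _; rewrite mulr_ge0 ?mu_ge0. Qed.

Lemma probX_Q k x : probX P sinit pi_act T f k x = \sum_ac Q k x ac.
Proof.
rewrite /Q exchange_big /=; apply: eq_bigr => s _.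
rewrite -[LHS]mulr1 -(Ha1 s) mulr_sumr.
by rewrite (partition_big h (fun _ => true)).
Qed.

Lemma probXY_Q k x ac y :
  probXY P sinit pi_act T f (fun a s' => (h a, g2 s')) k x (ac, y) = Q k x ac * PX x ac y.
Proof.
rewrite /probXY /Q mulr_suml [RHS]big_mkcond /=; apply: eq_bigr => s _.
rewrite mulr_suml [in RHS]big_mkcond /=.
case: (boolP (s \in T)) => sT /=.
  by apply: big1 => a _; apply: big1 => s' _; rewrite /step sT /= !mul0r mulr0.
case: (eqVneq (f s) x) => fsx /=; last first.
  by apply: big1 => a _; apply: big1 => s' _; rewrite mul0r mul0r.
apply: eq_bigr => a _.
case: (eqVneq (h a) ac) => hac /=; last first.
  apply: big1 => s' _; by rewrite xpair_eqE (negbTE hac) /= mulr0 mul0r.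
rewrite -fsx -hac -Hmarg mulr_sumr [RHS]big_mkcond /=; apply: eq_bigr => s' _.
rewrite xpair_eqE eqxx /= /step sT /=.
by case: (g2 s' == y); rewrite /= ?mul1r ?mulr1 ?mulr0 ?mul0r.
Qed.

Lemma term_eq (p q v : R) : 0 < p -> 0 <= q -> 0 <= v ->
  p * (q * v / p * ln (q * v / p)) = q * v * ln (q / p) + q * (v * ln v).
Proof.
move=> p0 q0 v0.
have [->|qn0] := eqVneq q 0; first by rewrite !(mul0r, mulr0, add0r).
have [->|vn0] := eqVneq v 0; first by rewrite !(mulr0, mul0r) addr0.
have qp : 0 < q by rewrite lt_def qn0.
have vp : 0 < v by rewrite lt_def vn0.
have -> : q * v / p = (q / p) * v by rewrite mulrAC.
rewrite lnM ?posrE ?divr_gt0 //.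
have pn0 : p != 0 by rewrite gt_eqF.
have e : p * (q / p) = q by rewrite mulrCA divff // mulr1.
transitivity (p * (q / p) * v * (ln (q / p) + ln v)); first ring.
rewrite e; ring.
Qed.

Definition C x ac := \sum_y PX x ac y * ln (PX x ac y).

Lemma decomp k x :
  probX P sinit pi_act T f k x * Hcond P sinit pi_act T f (fun a s' => (h a, g2 s')) k x =
  - \sum_ac Q k x ac * ln (Q k x ac / probX P sinit pi_act T f k x)
  - \sum_ac Q k x ac * C x ac.
Proof.
set p := probX P sinit pi_act T f k x.
have pE : p = \sum_ac Q k x ac by exact: probX_Q.
have p0 : 0 <= p by rewrite pE; apply: sumr_ge0 => ac _; exact: Q_ge0.
have [p00|pn0] := eqVneq p 0.
  have Q0 : forall ac, Q k x ac = 0.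
    move=> ac; move: p00; rewrite pE => /psumr_eq0P; apply => // ac' _; exact: Q_ge0.
  by rewrite p00 mul0r !big1 ?oppr0 ?subr0 ?addr0 // => ac _; rewrite Q0 mul0r.
have pp : 0 < p by rewrite lt_def pn0.
rewrite /Hcond mulrN -opprD -big_split /=; congr (- _).
transitivity (\sum_ac \sum_y p * (qcond P sinit pi_act T f (fun a s' => (h a, g2 s')) k x (ac, y)
   * ln (qcond P sinit pi_act T f (fun a s' => (h a, g2 s')) k x (ac, y)))).
  by rewrite mulr_sumr pair_bigA /=; apply: eq_bigr => -[ac y] _.
apply: eq_bigr => ac _.
rewrite /qcond -/p.
under eq_bigr => y _ do rewrite probXY_Q term_eq ?Q_ge0 //.
rewrite big_split /= -!mulr_sumr /C; congr (_ + _).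
by under eq_bigr do rewrite mulrAC; rewrite -mulr_sumr HPX1 mulr1.
Qed.

Lemma occ_ge0 s a : (0 <= occ P sinit pi_act T s a)%E.
Proof.
apply: nneseries_ge0 => k _ _; rewrite lee_fin.
by rewrite !mulr_ge0 ?ler0n ?mu_ge0.
Qed.

Lemma occr_ge n s a : s \notin T ->
  \sum_(k < n) mu' k s * pi_act s a <= occr P sinit pi_act T s a.
Proof.
move=> sT.
have H := @nneseries_lim_ge R (fun k => ((s \notin T)%:R * mu' k s * pi_act s a)%:E) xpredT 0 n.
have fin : occ P sinit pi_act T s a \is a fin_num.
  by rewrite ge0_fin_numE ?occ_ge0 ?Hfin.
rewrite -lee_fin /occr fineK //.
apply: le_trans (H _); last by move=> k _ _; rewrite lee_fin !mulr_ge0 ?ler0n ?mu_ge0.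
rewrite sumEFin big_mkord lee_fin sT /=; under [X in _ <= X]eq_bigr do rewrite mul1r; done.
Qed.

Lemma S_le n x ac : \sum_(k < n) Q k x ac <= numarg P sinit pi_act T f h x ac.
Proof.
rewrite /Q /numarg exchange_big /=; apply: ler_sum => s /andP[sT _].
rewrite exchange_big /=; apply: ler_sum => a _.
exact: occr_ge.
Qed.

Lemma logterm (a b U V : R) : 0 <= a -> a <= b -> 0 < U -> 0 < V ->
  a * ln (U / V) + a - b * (U / V) <= a * ln (a / b).
Proof.
move=> a0 ab U0 V0.
have [->|an0] := eqVneq a 0.
  rewrite !mul0r !add0r oppr_le0; apply: mulr_ge0; first exact: le_trans ab.
  by rewrite divr_ge0 // ltW.
have ap : 0 < a by rewrite lt_def an0.
have bp : 0 < b by apply: lt_le_trans ab.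
set y := b * U / (a * V).
have yp : 0 < y by rewrite /y divr_gt0 ?mulr_gt0.
have hy : ln y <= y - 1.
  have e1 : 1 + (y - 1) = y by ring.
  by have := @le_ln1Dx R (y - 1); rewrite e1; apply; lra.
have ly : ln y = ln b + ln U - ln a - ln V.
  rewrite /y ln_div ?posrE ?mulr_gt0 // !lnM ?posrE //; ring.
have ay : a * y = b * (U / V).
  rewrite /y; field; apply/andP; split; by rewrite gt_eqF.
rewrite !ln_div ?posrE //.
have H : a * ln y <= a * (y - 1) by rewrite ler_wpM2l // ltW.
have e2 : a * (y - 1) = b * (U / V) - a by rewrite mulrBr mulr1 ay.
rewrite ly e2 in H.
nra.
Qed.

Lemma logsum n (q p : nat -> R) (U V r rb : R) :
  (forall k, 0 <= q k) -> (forall k, q k <= p k) -> 0 < U -> 0 < V ->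
  0 <= r -> r <= rb ->
  U = \sum_(k < n) q k + r -> V = \sum_(k < n) p k + rb ->
  U * ln (U / V) <= \sum_(k < n) q k * ln (q k / p k).
Proof.
move=> q0 qp U0 V0 r0 rrb UE VE.
have H1 : \sum_(k < n) (q k * ln (U / V) + q k - p k * (U / V))
            <= \sum_(k < n) q k * ln (q k / p k).
  by apply: ler_sum => k _; apply: logterm.
rewrite big_split big_split /= sumrN -!mulr_suml in H1.
have H2 := @logterm r rb U V r0 rrb U0 V0.
have H3 : r * ln (r / rb) <= 0.
  apply: mulr_ge0_le0 => //; apply: ln_le0.
  have [->|rbn0] := eqVneq rb 0; first by rewrite invr0 mulr0 ler01.
  have rbp : 0 < rb by rewrite lt_def rbn0 (le_trans r0).
  by rewrite ler_pdivrMr // mul1r.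
have e : V * (U / V) = U by rewrite mulrCA divff ?mulr1 // gt_eqF.
move: H1 H2 H3 e.
set l := ln (U / V); set m := U / V.
set S := \sum_(k < n) q k; set Pp := \sum_(k < n) p k.
move: (\sum_(k < n) q k * ln (q k / p k)) => Z.
move: (ln (r / rb)) => lr.
have e1 : U * l = S * l + r * l by rewrite UE mulrDl.
have e2 : V * m = Pp * m + rb * m by rewrite VE mulrDl.
move=> H1 H2 H3 e.
rewrite -/S in UE; rewrite -/Pp in VE; clearbody l m S Pp; lra.
Qed.

Lemma elem_le (I : finType) (F : I -> R) (i : I) :
  (forall j, 0 <= F j) -> F i <= \sum_j F j.
Proof. by move=> F0; rewrite (bigD1 i) //= lerDl sumr_ge0. Qed.

Local Notation NA := (numarg P sinit pi_act T f h).
Local Notation pX := (probX P sinit pi_act T f).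

Lemma numarg_ge0 x ac : 0 <= NA x ac.
Proof. by have := S_le 0 x ac; rewrite big_ord0. Qed.

Lemma Abound n x ac :
  - \sum_(k < n) Q k x ac * ln (Q k x ac / pX k x)
  <= - (NA x ac * ln (NA x ac / \sum_b NA x b)).
Proof.
rewrite lerN2.
have [U0|Un0] := eqVneq (NA x ac) 0.
  have S0 : \sum_(k < n) Q k x ac = 0.
    apply: le_anti; apply/andP; split; first by rewrite -[X in _ <= X]U0; exact: S_le.
    by apply: sumr_ge0 => k _; exact: Q_ge0.
  rewrite U0 mul0r big1 // => k _.
  by move/psumr_eq0P: S0 => -> //; [rewrite mul0r | move=> j _; exact: Q_ge0].
have Up : 0 < NA x ac by rewrite lt_def Un0 numarg_ge0.
have Vp : 0 < \sum_b NA x b.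
  by apply: lt_le_trans Up _; apply: elem_le => j; exact: numarg_ge0.
apply: (@logsum n (fun k => Q k x ac) (fun k => pX k x) _ _
   (NA x ac - \sum_(k < n) Q k x ac)
   (\sum_b NA x b - \sum_(k < n) pX k x)).
- by move=> k; exact: Q_ge0.
- by move=> k; rewrite probX_Q; apply: elem_le => j; exact: Q_ge0.
- by [].
- by [].
- by rewrite subr_ge0 S_le.
- have -> : \sum_(k < n) pX k x = \sum_b \sum_(k < n) Q k x b.
    by rewrite [RHS]exchange_big /=; apply: eq_bigr => k _; exact: probX_Q.
  rewrite -sumrB.
  apply: (@elem_le _ (fun b => NA x b - \sum_(k < n) Q k x b)) => j.
  by rewrite subr_ge0 S_le.
- by rewrite subrKC.
- by rewrite subrKC.
Qed.

Lemma C_le0 x ac : C x ac <= 0.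
Proof.
apply: sumr_le0 => y _; apply: mulr_ge0_le0 => //; apply: ln_le0.
by rewrite -(HPX1 x ac); apply: (@elem_le _ (PX x ac)).
Qed.

Lemma Bbound n x ac :
  - \sum_(k < n) Q k x ac * C x ac <= - (NA x ac * C x ac).
Proof. by rewrite lerN2 -mulr_suml ler_wnM2r ?C_le0 ?S_le. Qed.

Local Notation Hc := (Hcond P sinit pi_act T f (fun a s' => (h a, g2 s'))).

Lemma term_ge0 k x : 0 <= pX k x * Hc k x.
Proof.
rewrite decomp -sumrN -sumrN -big_split /=; apply: sumr_ge0 => ac _.
apply: addr_ge0; last by rewrite oppr_ge0 mulr_ge0_le0 ?Q_ge0 ?C_le0.
rewrite oppr_ge0; apply: mulr_ge0_le0; first exact: Q_ge0.
apply: ln_le0.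
have [->|pn0] := eqVneq (pX k x) 0; first by rewrite invr0 mulr0 ler01.
have pp : 0 < pX k x.
  by rewrite lt_def pn0 probX_Q; apply: sumr_ge0 => j _; exact: Q_ge0.
rewrite ler_pdivrMr // mul1r probX_Q; apply: elem_le => j; exact: Q_ge0.
Qed.

Lemma key n x : \sum_(k < n) pX k x * Hc k x <=
  \sum_ac (- (NA x ac * ln (NA x ac / \sum_b NA x b))) + \sum_ac (- (NA x ac * C x ac)).
Proof.
under eq_bigr do rewrite decomp -sumrN -sumrN.
rewrite big_split /= [X in X + _]exchange_big [X in _ + X]exchange_big /=.
apply: lerD; apply: ler_sum => ac _; rewrite sumrN.
  exact: Abound.
exact: Bbound.
Qed.

Lemma gen_bound :
  (Gent P sinit pi_act T f (fun a s' => (h a, g2 s')) w <= (Gbar P sinit pi_act T f w h PX)%:E)%E.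
Proof.
have u0 : forall k, 0 <= \sum_x w x * pX k x * Hc k x.
  by move=> k; apply: sumr_ge0 => x _; rewrite -mulrA mulr_ge0 ?term_ge0.
rewrite /Gent; apply: lime_le.
  by apply: is_cvg_nneseries => k _ _; rewrite lee_fin.
apply: nearW => n; rewrite sumEFin lee_fin big_mkord exchange_big /=.
have GE : Gbar P sinit pi_act T f w h PX = \sum_x w x *
  (\sum_ac (- (NA x ac * ln (NA x ac / \sum_b NA x b))) + \sum_ac (- (NA x ac * C x ac))).
  rewrite /Gbar -sumrN -sumrN -big_split /=; apply: eq_bigr => x _.
  transitivity (\sum_ac (- (NA x ac * w x * ln (NA x ac / \sum_b NA x b))
      - \sum_y NA x ac * w x * PX x ac y * ln (PX x ac y))).
    by rewrite big_split /= !sumrN.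
  rewrite mulrDr !mulr_sumr -big_split /=; apply: eq_bigr => ac _.
  have -> : \sum_y NA x ac * w x * PX x ac y * ln (PX x ac y) = w x * (NA x ac * C x ac).
    by rewrite /C !mulr_sumr; apply: eq_bigr => y _; ring.
  ring.
rewrite GE; apply: ler_sum => x _.
under eq_bigr do rewrite -mulrA.
by rewrite -mulr_sumr ler_wpM2l ?key.
Qed.

End Gen.
Theorem proposition2 (R : realType) (N : nat) (HN : (0 < N)%N)
  (O L A : 'I_N -> finType)
  (P : forall i : 'I_N, (O i * L i)%type -> A i -> (O i * L i)%type -> R)
  (HP0 : forall i s a s', 0 <= P i s a s')
  (HP1 : forall i s a, \sum_(s' : (O i * L i)%type) P i s a s' = 1)
  (sinit : jS O L) (K : nat) (HK : (K <= N)%N)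
  (pi_comm : jO O -> {set 'I_N} -> R)
  (Hc0 : forall o c, 0 <= pi_comm o c)
  (Hc1 : forall o, \sum_(c : {set 'I_N} | #|c| == K) pi_comm o c = 1)
  (pi_act : jS O L -> jA A -> R)
  (Ha0 : forall s a, 0 <= pi_act s a)
  (Ha1 : forall s, \sum_(a : jA A) pi_act s a = 1)
  (Starget Savoid : {set jS O L})
  (Hdisj : [disjoint Starget & Savoid])
  (Hfin : forall (s : jS O L) (a : jA A), s \notin Starget :|: Savoid ->
      (occ P sinit pi_act (Starget :|: Savoid) s a < +oo)%E) :
  (forall i : 'I_N,
     (G_agent P sinit pi_act (Starget :|: Savoid) K pi_comm i
      <= (Gbar_agent P sinit pi_act (Starget :|: Savoid) K pi_comm i)%:E)%E)
  /\
  (forall c : {set 'I_N}, #|c| = K ->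
     (G_coal P sinit pi_act (Starget :|: Savoid) pi_comm c
      <= (Gbar_coal P sinit pi_act (Starget :|: Savoid) pi_comm c)%:E)%E).
Proof.
Proof.
split.
- move=> i.
  have := @gen_bound R N O L A P HP0 sinit pi_act (Starget :|: Savoid) Ha0 Ha1 Hfin
    _ _ _ (fi i) (hi (A:=A) i) (fun s' : jS O L => (s'.1 i, s'.2 i))
    (fun x : (jO O * L i)%type => wprime K pi_comm x.1 i) (@PXi _ _ _ _ _ P i).
  apply.
  + by move=> x; apply: sumr_ge0 => c _; exact: Hc0.
  + by move=> x ac y; exact: HP0.
  + by move=> x ac; exact: HP1.
  + by move=> s a y; exact: marg_agent.
- move=> c cK.
  have := @gen_bound R N O L A P HP0 sinit pi_act (Starget :|: Savoid) Ha0 Ha1 Hfin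
    _ _ _ (@fc _ O L c) (@hc _ A c)
    (fun s' : jS O L => (([ffun jj : cidx c => s'.1 (val jj)] : Oc O c),
                         ([ffun jj : cidx c => s'.2 (val jj)] : Lc L c)))
    (fun x : (jO O * Lc L c)%type => pi_comm x.1 c) (@PXc _ _ _ _ _ P c).
  apply.
  + by move=> x; exact: Hc0.
  + by move=> x ac y; apply: prodr_ge0 => jj _; exact: HP0.
  + move=> x ac; rewrite /PXc.
    rewrite (@pair_prod_sum _ (cidx c) (fun jj => O (val jj)) (fun jj => L (val jj))
       (fun jj z => P (val jj) (x.1 (val jj), x.2 jj) (ac jj) z)).
    by apply: big1 => jj _; exact: HP1.
  + move=> s a y; rewrite marg_coal //; rewrite /PXc.
    by apply: eq_bigr => jj _; rewrite /fc /hc /= !ffunE.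
Qed.
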